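(* Let $p$ be an odd prime, $q$ a power of $p$, and $n\ge 0$ an integer. Let $f_n(x)=\sum_{j\ge 0}\binom{n}{2j+1}x^j$. Then in $\mathbb{F}_q[x]$, $$F_n(1,x)=\left(\tfrac12\right)^{n-1}f_n(1-4x).$$ In particular, $F_n(1,x)$ is a permutation polynomial of $\mathbb{F}_q$ if and only if $f_n(x)$ is a permutation polynomial of $\mathbb{F}_q$.
   Context: For an integer $n\ge 1$, the $n$-th reversed Dickson polynomial of the third kind is $F_n(a,x)=\sum_{i=0}^{\lfloor n/2\rfloor}\frac{n-2i}{n-i}\binom{n-i}{i}(-x)^i a^{n-2i}$, where each coefficient $\frac{n-2i}{n-i}\binom{n-i}{i}$ is an integer (read in $\mathbb{F}_q$), and $F_0(a,x)=0$. A polynomial $f\in\mathbb{F}_q[x]$ is a permutation polynomial of $\mathbb{F}_q$ if $c\mapsto f(c)$ is a bijection of $\mathbb{F}_q$. *)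

(* Defs.v *)
From HB Require Import structures.
From mathcomp Require Import all_boot all_order all_algebra all_field.
Set Implicit Arguments. Unset Strict Implicit. Unset Printing Implicit Defensive.
Import GRing.Theory.
Local Open Scope ring_scope.

(* integer coefficient (n-2i)/(n-i) * C(n-i,i), computed exactly in nat *)
Definition dickson3_coef (n i : nat) : nat :=
  ((n - i.*2) * 'C(n - i, i)) %/ (n - i).

(* n-th reversed Dickson polynomial of the third kind, F_n(a, x), as a
   polynomial in x over R; F_0 = 0 *)
Definition revDickson3 (R : comNzRingType) (n : nat) (a : R) : {poly R} :=
  if n == 0%N then 0 else
  \sum_(i < n./2.+1)
     ((dickson3_coef n i)%:R * a ^+ (n - i.*2)) *: ('X * (-1)%:P) ^+ i.

(* f_n(x) = sum_{j >= 0} C(n, 2j+1) x^j  (terms with 2j+1 > n vanish) *)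
Definition fpoly (R : comNzRingType) (n : nat) : {poly R} :=
  \sum_(j < n) ('C(n, j.*2.+1))%:R *: 'X^j.

Definition is_perm_poly (F : finFieldType) (f : {poly F}) : Prop :=
  bijective (fun c : F => f.[c]).

(* Main.v *)
Require Import Defs.
From mathcomp Require Import all_boot all_order all_algebra all_field.
From mathcomp Require Import zify ring.
Import GRing.Theory.
Local Open Scope ring_scope.

Lemma dcoefE n i : (0 < n)%N -> (i <= n./2)%N -> dickson3_coef n i = 'C(n.-1 - i, i).
Proof.
move=> n0 le; rewrite /dickson3_coef.
have lt : (0 < n - i)%N by have := odd_double_half n; lia.
have -> : (n - i.*2 = (n - i) - i)%N by rewrite -addnn; lia.
rewrite -mul_bin_down mulKn //; congr 'C(_, _); lia.
Qed.

Lemma Xpow (R : comNzRingType) k : ('X * (-1)%:P) ^+ k = ((-1) ^+ k : R) *: 'X^k :> {poly R}.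
Proof. by rewrite -mul_polyC polyC_exp polyCN polyC1 mulrN1 exprNn. Qed.

Lemma coef_rev (R : comNzRingType) n i : (0 < n)%N ->
  (revDickson3 n (1:R))`_i = (-1) ^+ i * ('C(n.-1 - i, i))%:R.
Proof.
move=> n0; rewrite /revDickson3 (negPf (lt0n_neq0 n0)).
under eq_bigr => k _ do rewrite Xpow scalerA expr1n mulr1.
rewrite -(poly_def _ (fun k => (dickson3_coef n k)%:R * (-1) ^+ k)) coef_poly ltnS.
case: leqP => h.
  by rewrite dcoefE // mulrC.
rewrite bin_small ?mulr0 //; have := odd_double_half n; lia.
Qed.

Lemma coef_f (R : comNzRingType) n j : (fpoly R n)`_j = ('C(n, j.*2.+1))%:R.
Proof.
rewrite /fpoly -(poly_def _ (fun j => ('C(n, j.*2.+1))%:R)) coef_poly.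
case: ltnP => // h; rewrite bin_small //; lia.
Qed.

Lemma rev_rec (R : comNzRingType) m :
  revDickson3 m.+3 (1:R) + 'X * revDickson3 m.+1 1 = revDickson3 m.+2 1.
Proof.
apply/polyP => i; rewrite coefD coefXM !coef_rev //=.
case: i => [|k] /=; first by rewrite !subn0 !bin0 addr0.
have -> : (m.+2 - k.+1 = m.+1 - k)%N by lia.
have -> : (m.+1 - k.+1 = m - k)%N by lia.
have -> : ('C(m.+1 - k, k.+1) = 'C(m - k, k.+1) + 'C(m - k, k))%N.
  case: (leqP k m) => h.
    by have -> : (m.+1 - k = (m - k).+1)%N by lia.
  have -> : (m.+1 - k = 0)%N by lia.
  have -> : (m - k = 0)%N by lia.
  by rewrite !bin0n; case: k h.
by rewrite natrD exprS; ring.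
Qed.

Lemma f_rec (R : comNzRingType) n :
  fpoly R n.+2 + fpoly R n = fpoly R n.+1 *+ 2 + 'X * fpoly R n.
Proof.
apply/polyP => j; rewrite !(coefD, coefMn, coefXM, coef_f).
case: j => [|k] /=; first by rewrite !bin1 addr0 mulr2n -!natrD; congr _%:R; lia.
rewrite !doubleS !binS mulr2n -!natrD; congr _%:R; lia.
Qed.

Lemma rev1 (R : comNzRingType) : revDickson3 1 (1:R) = 1.
Proof. by apply/polyP => i; rewrite coef_rev // coef1; case: i => [|[|i]] //=; rewrite ?bin0n ?mulr0 ?mulr1. Qed.
Lemma rev2 (R : comNzRingType) : revDickson3 2 (1:R) = 1.
Proof. by apply/polyP => i; rewrite coef_rev // coef1; case: i => [|[|i]] //=; rewrite ?bin0n ?mulr0 ?mulr1. Qed.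
Lemma f1 (R : comNzRingType) : fpoly R 1 = 1.
Proof. by apply/polyP => i; rewrite coef_f coef1; case: i => [|i] //=; rewrite bin_small. Qed.
Lemma f2 (R : comNzRingType) : fpoly R 2 = 1 *+ 2.
Proof. by apply/polyP => i; rewrite coef_f coefMn coef1; case: i => [|i] //=; rewrite bin_small // mul0rn. Qed.

Lemma main_id (R : comNzRingType) n :
  ((2:R)^+n)%:P * revDickson3 n.+1 1 = fpoly R n.+1 \Po (1 - 4%:R *: 'X).
Proof.
set q := (1 - 4%:R *: 'X).
have hq : q = 1 - 'X *+ 4 by rewrite /q scaler_nat.
suff: (((2:R)^+n)%:P * revDickson3 n.+1 1 = fpoly R n.+1 \Po q) /\
      (((2:R)^+n.+1)%:P * revDickson3 n.+2 1 = fpoly R n.+2 \Po q) by case.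
elim: n => [|n [IH1 IH2]].
  rewrite rev1 rev2 f1 f2 mulr2n comp_polyD -polyC1 comp_polyC expr1 expr0 !mulr1.
  by rewrite -polyCD.
split=> //.
have e := f_rec R n.+1.
have -> : fpoly R n.+3 = fpoly R n.+2 *+ 2 + 'X * fpoly R n.+1 - fpoly R n.+1
  by rewrite -e addrK.
rewrite mulr2n comp_polyB !comp_polyD comp_polyM comp_polyX -IH1 -IH2.
rewrite -(rev_rec R n) hq !polyC_exp (_ : (2:R)%:P = 2) ?rmorph_nat //.
rewrite !exprS; ring.
Qed.

Theorem proposition3p2 (F : finFieldType) (p : nat)
  (hp : prime p) (hodd : odd p) (hchar : p \in [pchar F]) (n : nat) :
  revDickson3 n (1 : F) =
    ((2 : F)^-1 ^ (n%:Z - 1)) *: (fpoly F n \Po (1 - 4%:R *: 'X))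
  /\ (is_perm_poly (revDickson3 n (1 : F)) <-> is_perm_poly (fpoly F n)).
Proof.
have h2 : (2 : F) != 0.
  rewrite -(dvdn_pcharf hchar 2); apply/negP => /(dvdn_leq (isT : (0 < 2)%N)).
  rewrite leq_eqVlt => /orP [/eqP e|]; first by rewrite e in hodd.
  by case: p hp {hodd hchar} => [|[|]].
have h4 : (4%:R : F) != 0.
  by rewrite (_ : 4%:R = 2 * 2 :> F) ?mulf_neq0 // -natrM.
have Hid : revDickson3 n (1 : F) =
    ((2 : F)^-1 ^ (n%:Z - 1)) *: (fpoly F n \Po (1 - 4%:R *: 'X)).
  case: n => [|m].
    by rewrite /revDickson3 /fpoly big_ord0 comp_poly0 scaler0.
  have -> : (m.+1%:Z - 1 = m%:Z)%R by rewrite intS addrC addKr.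
  rewrite -main_id mul_polyC scalerA (_ : (2:F)^-1 ^ m%:Z = (2^-1)^+m) // exprVn mulVf ?scale1r //.
  by rewrite expf_neq0.
split=> //; rewrite Hid; set c := _ ^ _.
have hc : c != 0 by rewrite /c expfz_neq0 // invr_eq0.
rewrite /is_perm_poly.
have E : forall x, (c *: (fpoly F n \Po (1 - 4%:R *: 'X))).[x] =
   c * (fpoly F n).[1 - 4%:R * x].
  by move=> x; rewrite hornerZ horner_comp !hornerE.
split => hb.
- apply: (eq_bij (f := fun y => c^-1 * (c *: (fpoly F n \Po (1 - 4%:R *: 'X))).[(1 - y) / 4%:R])).
    apply: (bij_comp (f := fun z => c^-1 * z)); first by exists (fun z => c * z) => z /=; rewrite ?mulKf ?mulVKf // invr_eq0.
    apply: bij_comp => //. exists (fun z => 1 - z * 4%:R) => z /=.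
    + by rewrite divfK // opprB addrC subrK.
    + by rewrite opprB addrC subrK mulfK.
  by move=> y /=; rewrite E mulKf // mulrC divfK // opprB addrC subrK.
- apply: (eq_bij (f := fun x => c * (fpoly F n).[1 - 4%:R * x])); last by move=> x; rewrite E.
  apply: (bij_comp (f := fun z => c * z)); first by exists (fun z => c^-1 * z) => z /=; rewrite ?mulKf ?mulVKf.
  apply: bij_comp => //. exists (fun z => (1 - z) / 4%:R) => z /=.
  + by rewrite opprB addrC subrK mulrC mulKf.
  + by rewrite mulrC divfK // opprB addrC subrK.
Qed.
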